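(* Let $\ell,k$ be integers with $1\le\ell\le k$. Then $\overline{\alpha}(\{1,2k,2k+2\ell\})\ge\frac{2k}{4k+2\ell}$.
   Context: For a finite set $S$ of positive integers, the distance graph $G(S)$ has vertex set $\mathbb{Z}$, with $i,j$ adjacent iff $|i-j|\in S$. The density of $A\subseteq\mathbb{Z}$ is $\delta(A)=\limsup_{N\to\infty}\frac{|A\cap[-N,N]|}{2N+1}$, and the independence ratio $\overline{\alpha}(S)$ is the supremum of $\delta(A)$ over independent sets $A$ of $G(S)$. *)

(* Defs.v *)
From HB Require Import structures.
From mathcomp Require Import all_boot all_order all_algebra.
From mathcomp Require Import all_classical all_reals all_analysis.
Set Implicit Arguments. Unset Strict Implicit. Unset Printing Implicit Defensive.
Import Order.TTheory GRing.Theory Num.Theory.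
Local Open Scope classical_set_scope.
Local Open Scope ring_scope.

Definition dist_adj (S : seq nat) (i j : int) : Prop := (`|i - j|%N \in S).

Definition independent (S : seq nat) (A : set int) : Prop :=
  forall i j, A i -> A j -> ~ dist_adj S i j.

Definition count_in (A : set int) (N : nat) : nat :=
  (\sum_(0 <= i < (2 * N).+1) (`[< A (i%:Z - N%:Z)%R >] : nat))%N.

Definition density_seq (R : realType) (A : set int) : R^nat :=
  fun N => (count_in A N)%:R / ((2 * N).+1)%:R.

Definition density (R : realType) (A : set int) : R :=
  limn_sup (density_seq R A).

Definition indep_ratio (R : realType) (S : seq nat) : R :=
  sup [set density R A | A in independent S].

(* Main.v *)
Require Import Defs.
From HB Require Import structures.
From mathcomp Require Import all_boot all_order all_algebra.
From mathcomp Require Import all_classical all_reals all_analysis.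
From mathcomp Require Import zify.
Import Order.TTheory GRing.Theory Num.Theory.
Local Open Scope ring_scope.

Definition condn (k : nat) (r : nat) : bool :=
  (((r < 2*k) && ~~ odd r) || ((2*k <= r < 4*k) && odd r))%N.
Definition per (k l : nat) : int := (4 * k + 2 * l)%:Z.
Definition Aset (k l : nat) : set int :=
  fun i => condn k `|(i %% per k l)%Z|%N.

Lemma condn_spec k r : condn k r ->
  (exists a, (r < 2*k)%N /\ r = (2*a)%N) \/ (exists a, (2*k <= r < 4*k)%N /\ r = (2*a+1)%N).
Proof.
rewrite /condn => /orP [/andP [h1 h2]|/andP [h1 h2]].
- left; exists r./2; split => //; lia.
- right; exists r./2; split => //; lia.
Qed.

Lemma mul_cases (m p : int) : 0 < p ->
  (m = 0 /\ m * p = 0) \/ (m * p = p) \/ (m * p = - p) \/ (2 * p <= m * p) \/ (m * p <= - (2 * p)).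
Proof.
move=> hp.
have [h|[h|h]] : (m = 0 \/ m = 1 \/ m = -1) \/ 2 <= m \/ m <= -2 by lia.
- case: h => [->|[->|->]]; rewrite ?mul0r ?mul1r ?mulN1r; lia.
- right; right; right; left. by rewrite ler_pM2r.
- do 4 right. by rewrite -mulNr ler_pM2r //; lia.
Qed.

Lemma pair_sum k j : (j < 2 * k)%N -> (condn k (2 * j) + condn k (2 * j).+1 = 1)%N.
Proof.
move=> hj; rewrite /condn.
have o1 : odd (2 * j) = false by rewrite oddM.
have o2 : odd (2 * j).+1 = true by rewrite /= o1.
rewrite o1 o2 /=.
case: (ltnP j k) => hjk.
- have -> : (2 * j < 2 * k)%N by lia.
  have -> : ((2 * j).+1 < 2 * k)%N by lia.
  rewrite /=. lia.
- have -> : (2 * j < 2 * k)%N = false by lia.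
  have -> : ((2 * j).+1 < 2 * k)%N = false by lia.
  have -> : (2 * k <= (2 * j).+1 < 4 * k)%N by lia.
  rewrite /=. lia.
Qed.

Lemma half_sum k j : (j <= 2 * k)%N -> (\sum_(0 <= i < 2 * j) condn k i = j)%N.
Proof.
elim: j => [|j IH] hj; first by rewrite big_geq.
have e : (2 * j.+1 = (2 * j).+1.+1)%N by lia.
rewrite e !big_nat_recr //= IH; last by lia.
rewrite -addnA pair_sum; [lia|lia].
Qed.

Lemma period_sum k l : (2 * k <= \sum_(0 <= i < 4 * k + 2 * l) condn k i)%N.
Proof.
rewrite (big_cat_nat _ (n := 2 * (2 * k))) //=; last by lia.
rewrite half_sum //; lia.
Qed.

Lemma block_sum k l c :
  (\sum_(0 <= i < c * (4 * k + 2 * l)) condn k (i %% (4 * k + 2 * l)) =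
   c * \sum_(0 <= i < 4 * k + 2 * l) condn k i)%N.
Proof.
set p := (4 * k + 2 * l)%N.
elim: c => [|c IH]; first by rewrite mul0n big_geq.
rewrite mulSn (big_cat_nat _ (n := c * p)) //=; last by lia.
rewrite IH addnC; congr (_ + _)%N.
rewrite [(p + c * p)%N]addnC -{1}(add0n (c * p)%N) big_addn addKn.
apply: eq_big_nat => i /andP [_ hi].
by rewrite addnC modnMDl modn_small.
Qed.

Lemma A_nat k l (t : nat) : Aset k l t%:Z = condn k (t %% (4 * k + 2 * l)).
Proof.
by rewrite /Aset /per modz_nat absz_nat.
Qed.
Lemma A_indep k l : (1 <= l)%N -> (l <= k)%N ->
  independent [:: 1%N; (2 * k)%N; (2 * k + 2 * l)%N] (Aset k l).
Proof.
move=> hl hlk i j; rewrite /Aset /dist_adj.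
have hp : 0 < per k l by rewrite /per; lia.
have ei := divz_eq i (per k l); have ej := divz_eq j (per k l).
have bi : 0 <= (i %% per k l)%Z < per k l by lia.
have bj : 0 <= (j %% per k l)%Z < per k l by lia.
have [ri eri] : exists ri : nat, (i %% per k l)%Z = ri%:Z.
  by exists `|(i %% per k l)%Z|%N; lia.
have [rj erj] : exists rj : nat, (j %% per k l)%Z = rj%:Z.
  by exists `|(j %% per k l)%Z|%N; lia.
rewrite eri erj in ei ej *; rewrite !absz_nat.
move=> /condn_spec ci /condn_spec cj.
have := mul_cases ((i %/ per k l)%Z - (j %/ per k l)%Z) (per k l) hp.
set m := ((i %/ per k l)%Z - (j %/ per k l)%Z) => hm.
have eij : i - j = m * per k l + ri%:Z - rj%:Z by rewrite /m mulrBl; lia.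
move: hm eij; rewrite /per.
move: (m * _) => P hm eij.
rewrite !inE => hd.
have hd' : `|i - j|%N = 1%N \/ `|i - j|%N = (2 * k)%N \/ `|i - j|%N = (2 * k + 2 * l)%N.
  by move: hd => /or3P [/eqP|/eqP|/eqP]; auto.
clear hd.
case: ci => [[a [ha1 ha2]]|[a [ha1 ha2]]]; case: cj => [[b [hb1 hb2]]|[b [hb1 hb2]]]; lia.
Qed.
Local Open Scope classical_set_scope.

Lemma count_le A N : (count_in A N <= (2 * N).+1)%N.
Proof.
rewrite /count_in; apply: leq_trans (_ : (\sum_(0 <= i < (2 * N).+1) 1 <= _)%N).
  by apply: leq_sum => i _; case: asboolP.
by rewrite sum_nat_const_nat subn0 muln1.
Qed.

Lemma dseq_ge0 (R : realType) A n : 0 <= density_seq R A n.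
Proof. by rewrite /density_seq divr_ge0. Qed.

Lemma dseq_le1 (R : realType) A n : density_seq R A n <= 1.
Proof.
rewrite /density_seq ler_pdivrMr ?ltr0n // mul1r ler_nat; exact: count_le.
Qed.

Lemma dseq_bounded (R : realType) A : bounded_fun (density_seq R A).
Proof.
rewrite /bounded_near; near=> M => n _ /=.
rewrite ger0_norm ?dseq_ge0 //; apply: le_trans (dseq_le1 R A n) _.
by near: M; exact: nbhs_pinfty_ge.
Unshelve. all: end_near. Qed.

Lemma density_le1 (R : realType) A : density R A <= 1.
Proof.
rewrite /density limn_supE; last exact: dseq_bounded.
have hub := @bounded_fun_has_ubound _ _ _ (dseq_bounded R A).
apply: le_trans (_ : sups (density_seq R A) 0 <= 1).
  apply: ge_inf; last by exists 0%N.
  apply: bounded_fun_has_lbound_sups; exact: dseq_bounded.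
rewrite /sups /=; apply: ge_sup; first by exists (density_seq R A 0); exists 0%N.
by move=> _ [m _ <-]; apply: dseq_le1.
Qed.

Lemma density_ge (R : realType) A (c : R) :
  (forall n, exists2 m, (n <= m)%N & c <= density_seq R A m) -> c <= density R A.
Proof.
move=> H; rewrite /density limn_supE; last exact: dseq_bounded.
have hub := @bounded_fun_has_ubound _ _ _ (dseq_bounded R A).
apply: lb_le_inf; first by exists (sups (density_seq R A) 0); exists 0%N.
move=> _ [n _ <-]; have [m hm hc] := H n.
apply: le_trans hc _; rewrite /sups /=; apply: ub_le_sup; last by exists m.
exact: has_ubound_sdrop.
Qed.

Lemma A_shift k l (i n : nat) :
  (`[< Aset k l (i%:Z - (n * (4 * k + 2 * l))%N%:Z) >] : nat) = condn k (i %% (4 * k + 2 * l)).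
Proof.
rewrite /Aset asboolb.
have -> : i%:Z - (n * (4 * k + 2 * l))%N%:Z = (- n%:Z) * per k l + i%:Z.
  by rewrite /per mulNr PoszM addrC.
by rewrite modzMDl /per modz_nat absz_nat.
Qed.

Lemma count_A k l n : (1 <= k)%N ->
  (4 * n * k + 1 <= count_in (Aset k l) (n * (4 * k + 2 * l)))%N.
Proof.
move=> hk; rewrite /count_in.
under eq_bigr => i _ do rewrite A_shift.
set p := (4 * k + 2 * l)%N.
rewrite big_nat_recr //= mulnA (block_sum k l (2 * n)).
have -> : ((2 * n * p) %% p = 0)%N by rewrite modnMl.
have -> : condn k 0 = true by rewrite /condn; apply/orP; left; apply/andP; split => //; lia.
have := period_sum k l; rewrite -/p => h.
have := leq_mul (leqnn (2 * n)) h; rewrite /=; lia.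
Qed.

Lemma density_A (R : realType) k l : (1 <= l)%N -> (l <= k)%N ->
  ((2 * k)%:R / (4 * k + 2 * l)%:R : R) <= density R (Aset k l).
Proof.
move=> hl hlk; apply: density_ge => n.
set p := (4 * k + 2 * l)%N.
exists (n * p)%N; first by rewrite leq_pmulr // /p; lia.
have hc := count_A k l n (leq_trans hl hlk); rewrite -/p in hc.
rewrite /density_seq ler_pdivlMr ?ltr0n // mulrAC ler_pdivrMr ?ltr0n ?/p; last by lia.
rewrite -!natrM ler_nat.
apply: leq_trans (leq_mul hc (leqnn p)).
rewrite /p; nia.
Qed.

Local Close Scope classical_set_scope.

Theorem lemma30 (R : realType) (l k : nat) (hl : (1 <= l)%N) (hlk : (l <= k)%N) :
  ((2 * k)%:R / (4 * k + 2 * l)%:R : R) <=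
  indep_ratio R [:: 1%N; (2 * k)%N; (2 * k + 2 * l)%N].
Proof.
apply: le_trans (@density_A R k l hl hlk) _.
rewrite /indep_ratio; apply: ub_le_sup.
  by exists 1 => _ [A _ <-]; apply: density_le1.
by exists (Aset k l) => //; apply: A_indep.
Qed.
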